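(* Let $a<b$, $c<d$, $C\in\mathbb{R}\setminus\{0\}$, $\Delta=\max\{b-a,d-c\}$, and let $\gamma\ge1$ be an integer. For a pair of real sequences $(p,q)=((p_n)_{n\ge0},(q_n)_{n\ge0})$ define $$\|(p,q)\|_\gamma=\max\Big\{\sup_{n\ge0}\Big|\frac{(n!)^2p_n}{(\gamma|C|\Delta)^n}\Big|,\ \sup_{n\ge0}\Big|\frac{(n!)^2q_n}{(\gamma|C|\Delta)^n}\Big|\Big\}.$$ Define $\Lambda(p,q)=(\tilde p,\tilde q)$ by $$\tilde p_n=\sum_{k=0}^{n}p_k\frac{(C(d-c))^{n-k}k!}{(n-k)!\,n!}+\sum_{k=1}^{\infty}q_k\frac{C^n(d-c)^{n+k}k!}{(n+k)!\,n!},\qquad \tilde q_n=\sum_{k=0}^{n}q_k\frac{(C(b-a))^{n-k}k!}{(n-k)!\,n!}+\sum_{k=1}^{\infty}p_k\frac{C^n(b-a)^{n+k}k!}{(n+k)!\,n!}.$$ Then $\Lambda$, viewed as a linear map from the space of pairs of sequences with finite $\|\cdot\|_\gamma$ to the space of pairs with finite $\|\cdot\|_{\gamma+1}$, is bounded, with operator norm at most $I_0(2\sqrt{\gamma|C|}\,\Delta)$; that is, $\|\Lambda(p,q)\|_{\gamma+1}\le I_0(2\sqrt{\gamma|C|}\,\Delta)\,\|(p,q)\|_\gamma$ whenever $\|(p,q)\|_\gamma<\infty$.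
   Context: $I_0$ is the zero-order modified Bessel function of the first kind, $I_0(2z)=\sum_{k\ge0}z^{2k}/(k!)^2$. The map $\Lambda$ sends the power-series coefficients of the boundary data $k(\cdot,c)$, $k(a,\cdot)$ of the Goursat problem $\partial^2k/\partial s\partial t=Ck$ on $[a,b]\times[c,d]$ to those of $k(\cdot,d)$, $k(b,\cdot)$. *)

(* Defs.v *)
From Stdlib Require Import Reals Arith.
From Coquelicot Require Import Coquelicot.
Open Scope R_scope.

Definition I0 (x : R) : R :=
  Series (fun k => (x / 2) ^ (2 * k) / (INR (fact k)) ^ 2).

Definition Rbar_maxr (x y : Rbar) : Rbar :=
  if Rbar_le_dec x y then y else x.

Definition wsup (r : R) (s : nat -> R) : Rbar :=
  Lub_Rbar (fun x => exists n : nat,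
    x = Rabs ((INR (fact n)) ^ 2 * s n / r ^ n)).

Definition gnorm (gamma : nat) (C Delta : R) (p q : nat -> R) : Rbar :=
  Rbar_maxr (wsup (INR gamma * Rabs C * Delta) p)
            (wsup (INR gamma * Rabs C * Delta) q).

Definition Lam_comp (C L : R) (u v : nat -> R) (n : nat) : R :=
  sum_f_R0 (fun k => u k * (C * L) ^ (n - k) * INR (fact k)
                      / (INR (fact (n - k)) * INR (fact n))) n
  + Series (fun j => let k := S j in
      v k * C ^ n * L ^ (n + k) * INR (fact k)
        / (INR (fact (n + k)) * INR (fact n))).

Definition Lam_p (C c d : R) (p q : nat -> R) : nat -> R := Lam_comp C (d - c) p q.
Definition Lam_q (C a b : R) (p q : nat -> R) : nat -> R := Lam_comp C (b - a) q p.

(* Main.v *)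
Require Import Defs.
From Stdlib Require Import Reals Arith Lia Lra.
From Coquelicot Require Import Coquelicot.
Open Scope R_scope.

Lemma fact_mul_le (n k : nat) : (fact n * fact k <= fact (n + k))%nat.
Proof.
  induction k.
  - rewrite Nat.add_0_r; simpl; lia.
  - rewrite Nat.add_succ_r; simpl (fact (S _)).
    pose proof (lt_O_fact n). nia.
Qed.

Lemma Fpos k : 0 < INR (fact k).
Proof. apply INR_fact_lt_0. Qed.

Definition bess (t : R) (k : nat) : R := t ^ k / (INR (fact k)) ^ 2.

Lemma ex_bess t : 0 <= t -> ex_series (bess t).
Proof.
  intros Ht.
  assert (E : ex_series (fun k => t ^ k / INR (fact k))).
  { exists (exp t). pose proof (is_exp_Reals t) as H. unfold is_pseries in H.
    eapply is_series_ext; [|exact H]. intros k; simpl. rewrite pow_n_pow.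
    change (scal (t^k) (/ INR (fact k))) with (t^k * / INR (fact k)). reflexivity. }
  apply (@ex_series_le R_AbsRing R_CompleteNormedModule (bess t) _) with (2 := E). intros k.
  change (norm (bess t k)) with (Rabs (bess t k)). unfold bess.
  pose proof (Fpos k). assert (1 <= INR (fact k)).
  { apply (le_INR 1). apply lt_O_fact. }
  assert (0 <= t ^ k) by (apply pow_le; auto).
  rewrite Rabs_pos_eq.
  2:{ apply Rmult_le_pos; auto. apply Rlt_le, Rinv_0_lt_compat. nra. }
  unfold Rdiv. apply Rmult_le_compat_l; auto.
  apply Rinv_le_contravar; auto. nra.
Qed.

Lemma S1_bound (C L D g M : R) (u : nat -> R) (n : nat) :
  0 < L <= D -> 0 <= g -> 0 <= M ->
  (forall k, Rabs (u k) <= M * (g * Rabs C * D) ^ k / (INR (fact k)) ^ 2) ->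
  Rabs (sum_f_R0 (fun k => u k * (C * L) ^ (n - k) * INR (fact k)
                      / (INR (fact (n - k)) * INR (fact n))) n)
  <= M * (Rabs C * D) ^ n / (INR (fact n)) ^ 2 * (g + 1) ^ n.
Proof.
  intros HL Hg HM Hu.
  eapply Rle_trans; [apply sum_f_R0_triangle|].
  rewrite binomial, scal_sum.
  apply sum_Rle. intros k Hk.
  set (x := Rabs C).
  assert (Hx : 0 <= x) by apply Rabs_pos.
  pose proof (Fpos k) as Fk. pose proof (Fpos n) as Fn. pose proof (Fpos (n - k)) as Fnk.
  replace (u k * (C * L) ^ (n - k) * INR (fact k) / (INR (fact (n - k)) * INR (fact n)))
    with (u k * ((C * L) ^ (n - k) * (INR (fact k) / (INR (fact (n - k)) * INR (fact n)))))
    by (unfold Rdiv; ring).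
  rewrite Rabs_mult, Rabs_mult, <- RPow_abs, Rabs_mult.
  rewrite (Rabs_pos_eq L) by lra.
  rewrite (Rabs_pos_eq (INR (fact k) / _)).
  2:{ apply Rlt_le, Rdiv_lt_0_compat; nra. }
  fold x.
  assert (Hq : 0 <= INR (fact k) / (INR (fact (n - k)) * INR (fact n))).
  { apply Rlt_le, Rdiv_lt_0_compat; nra. }
  eapply Rle_trans.
  { apply Rmult_le_compat; [apply Rabs_pos| |apply Hu|].
    - apply Rmult_le_pos; auto. apply pow_le. apply Rmult_le_pos; lra.
    - apply Rmult_le_compat_r; auto. apply (pow_incr _ (x * D)). split; [apply Rmult_le_pos|apply Rmult_le_compat_l]; lra. }
  right.
  assert (E1 : (x * D) ^ n = (x * D) ^ k * (x * D) ^ (n - k)).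
  { rewrite <- pow_add. f_equal. lia. }
  assert (E2 : (g * x * D) ^ k = g ^ k * (x * D) ^ k).
  { rewrite <- Rpow_mult_distr. f_equal. ring. }
  fold x. rewrite E1, E2, pow1. unfold Binomial.C. field. lra.
Qed.

Lemma S2_term (C L D g M : R) (v : nat -> R) (n k : nat) :
  0 < L <= D -> 0 <= g -> 0 <= M ->
  Rabs (v k) <= M * (g * Rabs C * D) ^ k / (INR (fact k)) ^ 2 ->
  Rabs (v k * C ^ n * L ^ (n + k) * INR (fact k)
        / (INR (fact (n + k)) * INR (fact n)))
  <= M * ((g + 1) * Rabs C * D) ^ n / (INR (fact n)) ^ 2
       * bess (g * Rabs C * D ^ 2) k.
Proof.
  intros HL Hg HM Hv. unfold bess.
  set (x := Rabs C).
  assert (Hx : 0 <= x) by apply Rabs_pos.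
  pose proof (Fpos k) as Fk. pose proof (Fpos n) as Fn. pose proof (Fpos (n + k)) as Fnk.
  replace (v k * C ^ n * L ^ (n + k) * INR (fact k) / (INR (fact (n + k)) * INR (fact n)))
    with (v k * (C ^ n * (L ^ (n + k) * (INR (fact k) / (INR (fact (n + k)) * INR (fact n))))))
    by (unfold Rdiv; ring).
  rewrite Rabs_mult, Rabs_mult, Rabs_mult, <- RPow_abs, <- RPow_abs.
  rewrite (Rabs_pos_eq L) by lra.
  rewrite (Rabs_pos_eq (INR (fact k) / _)).
  2:{ apply Rlt_le, Rdiv_lt_0_compat; nra. }
  fold x.
  assert (Hq : 0 <= INR (fact k) / (INR (fact (n + k)) * INR (fact n))).
  { apply Rlt_le, Rdiv_lt_0_compat; nra. }
  assert (0 <= x ^ n) by (apply pow_le; auto).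
  eapply Rle_trans.
  { apply Rmult_le_compat; [apply Rabs_pos| |apply Hv|].
    - apply Rmult_le_pos; auto. apply Rmult_le_pos; auto. apply pow_le. lra.
    - apply Rmult_le_compat_l; auto. apply Rmult_le_compat_r; auto.
      apply (pow_incr _ D). lra. }
  fold x.
  set (P := M * g ^ k * x ^ n * x ^ k * D ^ n * D ^ k * D ^ k / (INR (fact k) * INR (fact n))).
  assert (HP : 0 <= P).
  { unfold P. apply Rmult_le_pos.
    - repeat apply Rmult_le_pos; auto; apply pow_le; nra.
    - apply Rlt_le, Rinv_0_lt_compat. nra. }
  assert (ED : D ^ (n + k) = D ^ n * D ^ k) by apply pow_add.
  assert (ED2 : (D ^ 2) ^ k = D ^ k * D ^ k).
  { rewrite <- pow_mult, <- pow_add. f_equal. lia. }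
  replace (M * (g * x * D) ^ k / INR (fact k) ^ 2 *
           (x ^ n * (D ^ (n + k) * (INR (fact k) / (INR (fact (n + k)) * INR (fact n))))))
    with (P * (1 / INR (fact (n + k)))).
  2:{ unfold P. rewrite ED, !Rpow_mult_distr. field. repeat split; lra. }
  replace (M * ((g + 1) * x * D) ^ n / INR (fact n) ^ 2 *
           ((g * x * D ^ 2) ^ k / INR (fact k) ^ 2))
    with (P * ((g + 1) ^ n / (INR (fact n) * INR (fact k)))).
  2:{ unfold P. rewrite !Rpow_mult_distr, ED2. field. repeat split; lra. }
  apply Rmult_le_compat_l; auto.
  assert (Hf : INR (fact n) * INR (fact k) <= INR (fact (n + k))).
  { rewrite <- mult_INR. apply le_INR. apply fact_mul_le. }
  assert (1 <= (g + 1) ^ n) by (apply pow_R1_Rle; lra).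
  apply Rle_trans with (1 / (INR (fact n) * INR (fact k))).
  - unfold Rdiv. rewrite !Rmult_1_l. apply Rinv_le_contravar; nra.
  - unfold Rdiv. apply Rmult_le_compat_r; auto. apply Rlt_le, Rinv_0_lt_compat; nra.
Qed.

Lemma comp_bound (C L D g M : R) (u v : nat -> R) (n : nat) :
  C <> 0 -> 0 < L <= D -> 0 <= g -> 0 <= M ->
  (forall k, Rabs (u k) <= M * (g * Rabs C * D) ^ k / (INR (fact k)) ^ 2) ->
  (forall k, Rabs (v k) <= M * (g * Rabs C * D) ^ k / (INR (fact k)) ^ 2) ->
  Rabs ((INR (fact n)) ^ 2 * Lam_comp C L u v n / ((g + 1) * Rabs C * D) ^ n)
  <= Series (bess (g * Rabs C * D ^ 2)) * M.
Proof.
  intros HC HL Hg HM Hu Hv.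
  assert (Hx : 0 < Rabs C) by (apply Rabs_pos_lt; auto).
  set (t := g * Rabs C * D ^ 2).
  assert (Ht : 0 <= t) by (unfold t; apply Rmult_le_pos; [nra|apply pow2_ge_0]).
  set (R' := ((g + 1) * Rabs C * D) ^ n).
  assert (HR : 0 < R') by (apply pow_lt; apply Rmult_lt_0_compat; [apply Rmult_lt_0_compat|]; lra).
  pose proof (Fpos n) as Fn.
  set (F2 := INR (fact n) ^ 2).
  assert (HF : 0 < F2) by (unfold F2; nra).
  unfold Lam_comp.
  set (S1 := sum_f_R0 _ n).
  set (f := fun j : nat => _).
  set (h := fun j => M * R' / F2 * bess t (S j)).
  assert (Hfh : forall j, Rabs (f j) <= h j).
  { intros j. unfold f, h, R', F2, t. cbv zeta. apply S2_term; auto. }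
  assert (Hexb : ex_series (bess t)) by (apply ex_bess; auto).
  assert (Hexh : ex_series h).
  { unfold h. apply (@ex_series_scal_l R_AbsRing R_NormedModule).
    apply (@ex_series_incr_1 R_AbsRing R_NormedModule (bess t)). auto. }
  assert (Hexf : ex_series (fun j => Rabs (f j))).
  { apply (@ex_series_le R_AbsRing R_CompleteNormedModule _ h); auto.
    intros j. change (norm (Rabs (f j))) with (Rabs (Rabs (f j))).
    rewrite Rabs_Rabsolu. auto. }
  assert (HS2 : Rabs (Series f) <= h 0%nat * 0 + M * R' / F2 * (Series (bess t) - 1)).
  { eapply Rle_trans; [apply Series_Rabs; auto|].
    eapply Rle_trans; [apply Series_le; [|exact Hexh]|].
    { intros j; split; [apply Rabs_pos|auto]. }
    right. unfold h. rewrite Series_scal_l.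
    rewrite (Series_incr_1 (bess t) Hexb).
    replace (bess t 0) with 1 by (unfold bess; simpl; field). ring. }
  assert (HS1 : Rabs S1 <= M * R' / F2).
  { unfold S1. eapply Rle_trans; [apply (S1_bound C L D g M u n HL Hg HM Hu)|].
    right. unfold R', F2. rewrite !Rpow_mult_distr. field. lra. }
  replace (F2 * (S1 + Series f) / R') with (F2 / R' * (S1 + Series f)) by (field; lra).
  rewrite Rabs_mult, (Rabs_pos_eq (F2 / R')) by (apply Rlt_le, Rdiv_lt_0_compat; lra).
  eapply Rle_trans.
  { apply Rmult_le_compat_l; [apply Rlt_le, Rdiv_lt_0_compat; lra|].
    eapply Rle_trans; [apply Rabs_triang|].
    apply Rplus_le_compat; [exact HS1|exact HS2]. }
  right. field. lra.
Qed.

Lemma wsup_elem r s n : Rbar_le (Finite (Rabs ((INR (fact n)) ^ 2 * s n / r ^ n))) (wsup r s).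
Proof. destruct (Lub_Rbar_correct (fun x => exists n : nat,
    x = Rabs ((INR (fact n)) ^ 2 * s n / r ^ n))) as [H _]. apply H. eauto. Qed.

Lemma wsup_le r s (K : R) : (forall n, Rabs ((INR (fact n)) ^ 2 * s n / r ^ n) <= K) ->
  Rbar_le (wsup r s) K.
Proof.
  intros H. destruct (Lub_Rbar_correct (fun x => exists n : nat,
    x = Rabs ((INR (fact n)) ^ 2 * s n / r ^ n))) as [_ H2]. apply H2.
  intros x [n ->]. apply H.
Qed.

Lemma maxr_l x y : Rbar_le x (Rbar_maxr x y).
Proof. unfold Rbar_maxr. destruct (Rbar_le_dec x y); auto. apply Rbar_le_refl. Qed.
Lemma maxr_r x y : Rbar_le y (Rbar_maxr x y).
Proof. unfold Rbar_maxr. destruct (Rbar_le_dec x y). apply Rbar_le_refl.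
  apply Rbar_lt_le, Rbar_not_le_lt; auto. Qed.
Lemma maxr_le x y z : Rbar_le x z -> Rbar_le y z -> Rbar_le (Rbar_maxr x y) z.
Proof. unfold Rbar_maxr. destruct (Rbar_le_dec x y); auto. Qed.

Lemma bound_of r s M k : 0 < r -> Rabs ((INR (fact k)) ^ 2 * s k / r ^ k) <= M ->
  Rabs (s k) <= M * r ^ k / (INR (fact k)) ^ 2.
Proof.
  intros Hr H. pose proof (Fpos k). assert (0 < r ^ k) by (apply pow_lt; auto).
  assert (0 < INR (fact k) ^ 2) by nra.
  unfold Rdiv in H. rewrite Rabs_mult, Rabs_mult, (Rabs_pos_eq (_ ^ 2)), (Rabs_pos_eq (/ _)) in H by (try apply Rlt_le, Rinv_0_lt_compat; lra).
  apply (Rmult_le_reg_l (INR (fact k) ^ 2 * / r ^ k)).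
  { apply Rmult_lt_0_compat; auto. apply Rinv_0_lt_compat; auto. }
  eapply Rle_trans; [|right]. { rewrite Rmult_assoc, (Rmult_comm (/ _)), <- Rmult_assoc. exact H. }
  field. lra.
Qed.

Theorem mainTheorem3 (a b c d C : R) (gamma : nat) (p q : nat -> R) :
  a < b -> c < d -> C <> 0 -> (1 <= gamma)%nat ->
  is_finite (gnorm gamma C (Rmax (b - a) (d - c)) p q) ->
  Rbar_le
    (gnorm (S gamma) C (Rmax (b - a) (d - c)) (Lam_p C c d p q) (Lam_q C a b p q))
    (Rbar_mult (I0 (2 * sqrt (INR gamma * Rabs C) * Rmax (b - a) (d - c)))
               (gnorm gamma C (Rmax (b - a) (d - c)) p q)).
Proof.
  intros Hab Hcd HC Hg Hfin.
  set (D := Rmax (b - a) (d - c)).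
  fold D in Hfin.
  assert (HD1 : b - a <= D) by apply Rmax_l.
  assert (HD2 : d - c <= D) by apply Rmax_r.
  set (g := INR gamma).
  assert (Hg1 : 1 <= g) by (apply (le_INR 1); auto).
  assert (Hx : 0 < Rabs C) by (apply Rabs_pos_lt; auto).
  assert (Hr : 0 < g * Rabs C * D) by (apply Rmult_lt_0_compat; [apply Rmult_lt_0_compat|]; lra).
  set (M := real (gnorm gamma C D p q)).
  assert (EM : gnorm gamma C D p q = Finite M) by (unfold M; symmetry; exact Hfin).
  rewrite EM.
  assert (Hpw : Rbar_le (wsup (g * Rabs C * D) p) (Finite M)) by (rewrite <- EM; apply maxr_l).
  assert (Hqw : Rbar_le (wsup (g * Rabs C * D) q) (Finite M)) by (rewrite <- EM; apply maxr_r).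
  assert (Hp : forall k, Rabs (p k) <= M * (g * Rabs C * D) ^ k / (INR (fact k)) ^ 2).
  { intros k. apply bound_of; auto.
    exact (Rbar_le_trans _ _ _ (wsup_elem (g * Rabs C * D) p k) Hpw). }
  assert (Hq : forall k, Rabs (q k) <= M * (g * Rabs C * D) ^ k / (INR (fact k)) ^ 2).
  { intros k. apply bound_of; auto.
    exact (Rbar_le_trans _ _ _ (wsup_elem (g * Rabs C * D) q k) Hqw). }
  assert (HM : 0 <= M).
  { eapply Rle_trans; [apply Rabs_pos|].
    exact (Rbar_le_trans _ _ _ (wsup_elem (g * Rabs C * D) p 0) Hpw). }
  assert (EI : I0 (2 * sqrt (g * Rabs C) * D) = Series (bess (g * Rabs C * D ^ 2))).
  { unfold I0. apply Series_ext. intros k. unfold bess. f_equal.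
    rewrite pow_mult. f_equal.
    replace (2 * sqrt (g * Rabs C) * D / 2) with (sqrt (g * Rabs C) * D) by field.
    rewrite Rpow_mult_distr. simpl. rewrite Rmult_1_r, sqrt_sqrt; [ring|nra]. }
  fold g. rewrite EI. simpl Rbar_mult.
  unfold gnorm. rewrite S_INR. fold g.
  apply maxr_le; apply wsup_le; intros n.
  - unfold Lam_p. apply comp_bound; auto; lra.
  - unfold Lam_q. apply comp_bound; auto; lra.
Qed.
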